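(* Let $(r_k)_{k\in\mathbb N}$ be a nonnegative sequence such that $(\Phi(k)r_k/k)_{k\in\mathbb N}$ is nonincreasing. Define $a_0=0$ and $a_n=\sum_{k=1}^n g_{n,k}r_k$ for $n\ge1$. Then $a_n=O\big(\sum_{k=1}^n r_k\Phi(k)/k\big)$ as $n\to\infty$.
   Context: Let $\nu$ be a nonzero measure on $(0,1)$ with $\int_0^1x\,\nu(dx)<\infty$; for $1\le k\le m$ let $\lambda_{m,k}=\int_0^1x^k(1-x)^{m-k}\nu(dx)$, $\varphi_{m,k}=\binom mk\lambda_{m,k}$, and $\Phi(z)=\int_0^1(1-(1-x)^z)\nu(dx)$ (so $\Phi(n)=\sum_{k=1}^n\varphi_{n,k}$). Let $N_n^*$ be the nonincreasing continuous-time Markov chain started at $n$ which jumps from $m$ to $m-k$ at rate $\varphi_{m,k}$, $1\le k\le m$ (absorbed at $0$). For $0\le k\le n$, $g_{n,k}$ denotes the probability that $N_n^*$ ever visits state $k$. *)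

(* Defs.v *)
From Stdlib Require Import Reals Lra Classical ClassicalEpsilon.
Open Scope R_scope.

Definition in01 (x : R) : Prop := 0 < x < 1.

Fixpoint fsum (n : nat) (f : nat -> R) : R :=
  match n with
  | O => 0
  | S n' => fsum n' f + f n'
  end.

(** Supremum of a set of reals (0 if empty or unbounded above). *)
Definition Rsup (E : R -> Prop) : R :=
  match excluded_middle_informative (bound E /\ exists x, E x) with
  | left H => proj1_sig (completeness E (proj1 H) (proj2 H))
  | right _ => 0
  end.

Definition ind (A : R -> Prop) (x : R) : R :=
  if excluded_middle_informative (A x) then 1 else 0.

(** A finite (nonnegative, countably additive) measure on (0,1), defined on a
    sigma-algebra of subsets of R containing all open intervals (hence all
    Borel sets); it is concentrated on (0,1). *)
Record fmeasure01 := {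
  msbl : (R -> Prop) -> Prop;
  mu : (R -> Prop) -> R;
  msbl_interval : forall a b : R, msbl (fun x => a < x < b);
  msbl_compl : forall A, msbl A -> msbl (fun x => ~ A x);
  msbl_union : forall A : nat -> R -> Prop,
      (forall n, msbl (A n)) -> msbl (fun x => exists n, A n x);
  mu_nonneg : forall A, msbl A -> 0 <= mu A;
  mu_sigma_additive : forall A : nat -> R -> Prop,
      (forall n, msbl (A n)) ->
      (forall i j x, A i x -> A j x -> i = j) ->
      infinite_sum (fun n => mu (A n)) (mu (fun x => exists n, A n x));
  mu_support : forall A, msbl A -> mu A = mu (fun x => A x /\ in01 x)
}.

Definition simple_below (M : fmeasure01) (f : R -> R) (v : R) : Prop :=
  exists (n : nat) (c : nat -> R) (A : nat -> R -> Prop),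
    (forall i, (i < n)%nat -> 0 <= c i /\ msbl M (A i)) /\
    (forall x, in01 x -> fsum n (fun i => c i * ind (A i) x) <= f x) /\
    v = fsum n (fun i => c i * mu M (A i)).

Definition integral (M : fmeasure01) (f : R -> R) : R :=
  Rsup (simple_below M f).

(** The measure nu of the paper is encoded by the finite measure
    M(dx) = x nu(dx); thus nu(dx) = x^{-1} M(dx). *)

(** lambda_{m,k} = int x^k (1-x)^{m-k} nu(dx) = int x^{k-1}(1-x)^{m-k} M(dx), 1<=k<=m *)
Definition lam (M : fmeasure01) (m k : nat) : R :=
  integral M (fun x => x ^ (k - 1) * (1 - x) ^ (m - k)).

Definition phi (M : fmeasure01) (m k : nat) : R := C m k * lam M m k.

(** Phi(n) = int (1-(1-x)^n) nu(dx) = int (1-(1-x)^n)/x M(dx), at integers n *)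
Definition PhiN (M : fmeasure01) (n : nat) : R :=
  integral M (fun x => (1 - (1 - x) ^ n) / x).

(** Jump chain of N^*: from state a >= 1 it jumps to c < a with probability
    phi_{a,a-c} / Phi(a). State 0 is absorbing (no further jumps). *)
Definition Pjump (M : fmeasure01) (a c : nat) : R :=
  phi M a (a - c) / PhiN M a.

(** jpow M t a b = P(jump chain started at a is at b after exactly t jumps). *)
Fixpoint jpow (M : fmeasure01) (t a b : nat) : R :=
  match t with
  | O => if Nat.eqb a b then 1 else 0
  | S t' => fsum a (fun c => Pjump M a c * jpow M t' c b)
  end.

(** g_{n,k} = P(N_n^* ever visits k). Since the chain is strictly decreasing
    it visits k at most once and makes at most n jumps, so this equals
    sum_{t=0}^{n} P(X_t = k) for the embedded jump chain X. *)
Definition g (M : fmeasure01) (n k : nat) : R :=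
  fsum (S n) (fun t => jpow M t n k).

Definition a_seq (M : fmeasure01) (r : nat -> R) (n : nat) : R :=
  fsum n (fun i => g M n (S i) * r (S i)).

Definition b_seq (M : fmeasure01) (r : nat -> R) (n : nat) : R :=
  fsum n (fun i => r (S i) * PhiN M (S i) / INR (S i)).

(* Main.v *)
Require Import Defs.
From Stdlib Require Import Reals Arith Lra Lia Classical ClassicalEpsilon FunctionalExtensionality PropExtensionality.
Require Import Defs.
Open Scope R_scope.


Lemma fsum_ext n f g : (forall i, (i < n)%nat -> f i = g i) -> fsum n f = fsum n g.
Proof. induction n; intros H; simpl; auto. rewrite IHn by (intros; apply H; lia). rewrite H by lia; auto. Qed.

Lemma fsum_le n f g : (forall i, (i < n)%nat -> f i <= g i) -> fsum n f <= fsum n g.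
Proof. induction n; intros H; simpl; [lra|]. apply Rplus_le_compat; [apply IHn; intros; apply H; lia| apply H; lia]. Qed.

Lemma fsum_nonneg n f : (forall i, (i < n)%nat -> 0 <= f i) -> 0 <= fsum n f.
Proof. intros H. replace 0 with (fsum n (fun _ => 0)). apply fsum_le; auto.
 induction n; simpl; auto. rewrite IHn; [lra|intros; apply H; lia]. Qed.

Lemma fsum_zero n f : (forall i, (i < n)%nat -> f i = 0) -> fsum n f = 0.
Proof. induction n; intros H; simpl; auto. rewrite IHn by (intros; apply H; lia). rewrite H by lia; lra. Qed.

Lemma fsum_plus n f g : fsum n (fun i => f i + g i) = fsum n f + fsum n g.
Proof. induction n; simpl; [lra|]. rewrite IHn; ring. Qed.

Lemma fsum_scal n c f : fsum n (fun i => c * f i) = c * fsum n f.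
Proof. induction n; simpl; [ring|]. rewrite IHn; ring. Qed.

Lemma fsum_shift n f : fsum (S n) f = f 0%nat + fsum n (fun i => f (S i)).
Proof. induction n; simpl in *; [ring|]. rewrite IHn; ring. Qed.

Lemma fsum_swap n m (f : nat -> nat -> R) :
  fsum n (fun i => fsum m (fun j => f i j)) = fsum m (fun j => fsum n (fun i => f i j)).
Proof. induction n; simpl. - symmetry; apply fsum_zero; auto.
 - rewrite IHn. rewrite <- fsum_plus. auto. Qed.

Lemma fsum_app n m f : fsum (n + m) f = fsum n f + fsum m (fun i => f (n + i)%nat).
Proof. induction m; simpl. - rewrite Nat.add_0_r; ring.
 - rewrite Nat.add_succ_r; simpl. rewrite IHm; ring. Qed.

Lemma fsum_sumf n f : fsum (S n) f = sum_f_R0 f n.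
Proof. induction n; simpl in *; [ring|]. rewrite IHn; ring. Qed.

Lemma fsumS n f : fsum (S n) f = fsum n f + f n.
Proof. reflexivity. Qed.

Lemma fsum_refl n h : fsum n (fun c => h (n - c)%nat) = fsum n (fun i => h (S i)).
Proof. revert h; induction n; intros h; [reflexivity|].
 rewrite (fsum_shift n (fun i => h (S i))). rewrite fsumS.
 replace (S n - n)%nat with 1%nat by lia.
 rewrite (fsum_ext n (fun c => h (S n - c)%nat) (fun c => (fun k => h (S k)) (n - c)%nat)).
 - rewrite (IHn (fun k => h (S k))). ring.
 - intros; cbv beta; f_equal; lia. Qed.

Lemma fsum_ge_term n f j : (forall i, (i < n)%nat -> 0 <= f i) -> (j < n)%nat -> f j <= fsum n f.
Proof. induction n; intros H Hj; [lia|]. simpl. destruct (Nat.eq_dec j n).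
 - subst. assert (0 <= fsum n f) by (apply fsum_nonneg; intros; apply H; lia). lra.
 - assert (f j <= fsum n f) by (apply IHn; [intros; apply H|]; lia). assert (0 <= f n) by (apply H; lia). lra. Qed.


Lemma pred_ext (A B : R -> Prop) : (forall x, A x <-> B x) -> A = B.
Proof. intros H; apply functional_extensionality; intros x; apply propositional_extensionality; auto. Qed.

Section Meas.
Variable M : fmeasure01.

Lemma msbl_ext A B : (forall x, A x <-> B x) -> msbl M A -> msbl M B.
Proof. intros H; rewrite (pred_ext A B H); auto. Qed.

Lemma mu_ext A B : (forall x, A x <-> B x) -> mu M A = mu M B.
Proof. intros H; rewrite (pred_ext A B H); auto. Qed.

Lemma msbl_empty : msbl M (fun _ => False).
Proof. apply (msbl_ext (fun x => 0 < x < 0)); [intros; split; [lra|tauto]|apply msbl_interval]. Qed.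

Lemma mu_empty : mu M (fun _ => False) = 0.
Proof.
  set (m := mu M (fun _ => False)).
  assert (H := mu_sigma_additive M (fun _ => fun _ => False) (fun _ => msbl_empty) (fun i j x H _ => False_ind _ H)).
  simpl in H. rewrite (mu_ext (fun x => exists _ : nat, False) (fun _ => False)) in H by (intros; split; [intros [_ h]; auto|tauto]).
  fold m in H.
  destruct (Req_dec m 0) as [E|E]; auto.
  destruct (H (Rabs m / 2)) as [N HN]. { apply Rabs_pos_lt in E; lra. }
  specialize (HN (S N) ltac:(lia)). rewrite sum_cte in HN. unfold R_dist in HN.
  replace (m * INR (S (S N)) - m) with (m * INR (S N)) in HN by (rewrite (S_INR (S N)); ring).
  rewrite Rabs_mult in HN. rewrite (Rabs_right (INR (S N))) in HN by (apply Rle_ge, pos_INR).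
  assert (1 <= INR (S N)) by (rewrite S_INR; assert (0 <= INR N) by apply pos_INR; lra).
  assert (0 < Rabs m) by (apply Rabs_pos_lt; auto). nra.
Qed.

Lemma msbl_union2 A B : msbl M A -> msbl M B -> msbl M (fun x => A x \/ B x).
Proof. intros HA HB.
  apply (msbl_ext (fun x => exists n:nat, (if Nat.eqb n 0 then A else B) x)).
  - intros x; split. + intros [n Hn]; destruct (Nat.eqb n 0); auto.
    + intros [h|h]; [exists 0%nat; auto| exists 1%nat; auto].
  - apply msbl_union. intros n; destruct (Nat.eqb n 0); auto. Qed.

Lemma msbl_inter A B : msbl M A -> msbl M B -> msbl M (fun x => A x /\ B x).
Proof. intros HA HB.
  apply (msbl_ext (fun x => ~ (~ A x \/ ~ B x))).
  - intros x; tauto.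
  - apply msbl_compl, msbl_union2; apply msbl_compl; auto. Qed.

Lemma mu_split E A : msbl M E -> msbl M A ->
  mu M E = mu M (fun x => E x /\ A x) + mu M (fun x => E x /\ ~ A x).
Proof. intros HE HA.
  set (Sq := fun n : nat => match n with 0 => (fun x => E x /\ A x) | 1 => (fun x => E x /\ ~ A x) | _ => (fun _ => False) end).
  assert (HS : forall n, msbl M (Sq n)).
  { intros [|[|n]]; simpl. apply msbl_inter; auto. apply msbl_inter; auto; apply msbl_compl; auto. apply msbl_empty. }
  assert (HD : forall i j x, Sq i x -> Sq j x -> i = j).
  { intros [|[|i]] [|[|j]] x; simpl; tauto. }
  assert (H := mu_sigma_additive M Sq HS HD).
  rewrite (mu_ext (fun x => exists n, Sq n x) E) in H.
  2:{ intros x; split. - intros [[|[|n]] h]; simpl in h; tauto.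
      - intros h. destruct (classic (A x)); [exists 0%nat| exists 1%nat]; simpl; auto. }
  apply (uniqueness_sum _ _ _ H).
  intros eps Heps. exists 1%nat. intros n Hn. unfold R_dist.
  replace (sum_f_R0 (fun n0 => mu M (Sq n0)) n) with (mu M (Sq 0%nat) + mu M (Sq 1%nat)).
  { simpl. rewrite Rminus_diag, Rabs_R0; auto. }
  induction n; [lia|]. destruct n. { simpl. reflexivity. }
  change (sum_f_R0 (fun n0 : nat => mu M (Sq n0)) (S (S n))) with (sum_f_R0 (fun n0 : nat => mu M (Sq n0)) (S n) + mu M (Sq (S (S n)))). rewrite <- IHn by lia. replace (mu M (Sq (S (S n)))) with 0 by (symmetry; apply mu_empty). ring.
Qed.
End Meas.

Lemma ind_in (A : R -> Prop) x : A x -> ind A x = 1.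
Proof. unfold ind; destruct (excluded_middle_informative (A x)); tauto. Qed.
Lemma ind_out (A : R -> Prop) x : ~ A x -> ind A x = 0.
Proof. unfold ind; destruct (excluded_middle_informative (A x)); tauto. Qed.

Section Meas.
Variable M : fmeasure01.

Lemma sb_upper n : forall c A B D, msbl M D -> (forall i, (i<n)%nat -> msbl M (A i)) ->
  (forall x, D x -> fsum n (fun i => c i * ind (A i) x) <= B) ->
  fsum n (fun i => c i * mu M (fun x => A i x /\ D x)) <= B * mu M D.
Proof.
  induction n; intros c A B D HD HA H.
  - simpl. destruct (classic (exists x, D x)) as [[x Hx]|Hn].
    + specialize (H x Hx); simpl in H. assert (0 <= mu M D) by (apply mu_nonneg; auto). nra.
    + rewrite (mu_ext M D (fun _ => False)) by (intros x; split; [intros h; apply Hn; eauto|tauto]).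
      rewrite mu_empty; lra.
  - set (A' := A n). set (D1 := fun x => D x /\ A' x). set (D2 := fun x => D x /\ ~ A' x).
    assert (HA' : msbl M A') by (apply HA; lia).
    assert (HD1 : msbl M D1) by (apply msbl_inter; auto).
    assert (HD2 : msbl M D2) by (apply msbl_inter; auto; apply msbl_compl; auto).
    assert (IH1 := IHn c A (B - c n) D1 HD1 ltac:(intros; apply HA; lia)
       ltac:(intros x [Hx Hx']; specialize (H x Hx); simpl in H; rewrite (ind_in (A n) x Hx') in H; lra)).
    assert (IH2 := IHn c A B D2 HD2 ltac:(intros; apply HA; lia)
       ltac:(intros x [Hx Hx']; specialize (H x Hx); simpl in H; rewrite (ind_out (A n) x Hx') in H; lra)).
    rewrite (mu_split M D A' HD HA'). fold D1 D2.
    rewrite fsumS.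
    rewrite (fsum_ext n _ (fun i => c i * mu M (fun x => A i x /\ D1 x) + c i * mu M (fun x => A i x /\ D2 x))).
    2:{ intros i Hi. rewrite (mu_split M (fun x => A i x /\ D x) A').
        2:{ apply msbl_inter; [apply HA; lia|auto]. } 2: auto.
        rewrite (mu_ext M (fun x => (A i x /\ D x) /\ A' x) (fun x => A i x /\ D1 x)) by (unfold D1; tauto).
        rewrite (mu_ext M (fun x => (A i x /\ D x) /\ ~ A' x) (fun x => A i x /\ D2 x)) by (unfold D2; tauto).
        ring. }
    rewrite fsum_plus.
    rewrite (mu_ext M (fun x => A n x /\ D x) D1) by (unfold D1, A'; tauto).
    lra.
Qed.

Lemma sb_lower n c A B D : msbl M D -> (forall i, (i<n)%nat -> msbl M (A i)) ->
  (forall x, D x -> B <= fsum n (fun i => c i * ind (A i) x)) ->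
  B * mu M D <= fsum n (fun i => c i * mu M (fun x => A i x /\ D x)).
Proof.
  intros HD HA H.
  assert (E : forall (h : nat -> R), fsum n (fun i => - c i * h i) = - fsum n (fun i => c i * h i)).
  { intros h. replace (- fsum n (fun i => c i * h i)) with ((-1) * fsum n (fun i => c i * h i)) by ring.
    rewrite <- fsum_scal. apply fsum_ext; intros; ring. }
  assert (U := sb_upper n (fun i => - c i) A (- B) D HD HA).
  rewrite E in U. 
  assert (U' : forall x, D x -> fsum n (fun i => - c i * ind (A i) x) <= - B) by (intros x Hx; rewrite E; specialize (H x Hx); lra).
  specialize (U U'). lra.
Qed.
End Meas.

Definition good (f : R -> R) (B : R) := forall x, in01 x -> 0 <= f x <= B.

Section Int.
Variable M : fmeasure01.

Lemma msbl01 : msbl M in01.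
Proof. exact (msbl_interval M 0 1). Qed.

Lemma sb_bound f B v : good f B -> simple_below M f v -> v <= B * mu M in01.
Proof.
  intros Hg [n [c [A [H1 [H2 H3]]]]]. subst v.
  rewrite (fsum_ext n _ (fun i => c i * mu M (fun x => A i x /\ in01 x))).
  - apply sb_upper; [apply msbl01| intros; apply H1; auto|].
    intros x Hx. specialize (H2 x Hx). specialize (Hg x Hx). lra.
  - intros i Hi. rewrite mu_support; auto. apply H1; auto.
Qed.

Lemma sb_zero f : (forall x, in01 x -> 0 <= f x) -> simple_below M f 0.
Proof. intros H. exists 0%nat, (fun _ => 0), (fun _ _ => False). simpl; repeat split; auto; intros; lia. Qed.

Lemma int_lub f B : good f B -> is_lub (simple_below M f) (integral M f).
Proof.
  intros Hg. unfold integral, Rsup.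
  destruct (excluded_middle_informative _) as [H|H].
  - apply (proj2_sig (completeness _ _ _)).
  - exfalso; apply H. split.
    + exists (B * mu M in01). intros v Hv. eapply sb_bound; eauto.
    + exists 0; apply sb_zero. intros; apply Hg; auto.
Qed.

Lemma int_ge f B v : good f B -> simple_below M f v -> v <= integral M f.
Proof. intros Hg Hv. apply (proj1 (int_lub f B Hg)); auto. Qed.

Lemma int_le f B : good f B -> integral M f <= B * mu M in01.
Proof. intros Hg. apply (proj2 (int_lub f B Hg)). intros v Hv; eapply sb_bound; eauto. Qed.

Lemma int_nonneg f B : good f B -> 0 <= integral M f.
Proof. intros Hg. eapply int_ge; eauto. apply sb_zero; intros; apply Hg; auto. Qed.

Lemma int_mono f g B : good g B -> (forall x, in01 x -> 0 <= f x <= g x) -> integral M f <= integral M g.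
Proof.
  intros Hg Hf. assert (Gf : good f B) by (intros x Hx; specialize (Hg x Hx); specialize (Hf x Hx); lra).
  apply (proj2 (int_lub f B Gf)). intros v [n [c [A [H1 [H2 H3]]]]].
  eapply int_ge; eauto. exists n, c, A. split; [|split]; auto.
  - intros x Hx; specialize (H2 x Hx); specialize (Hf x Hx); lra.
Qed.

Lemma sb_add f g v w : simple_below M f v -> simple_below M g w -> simple_below M (fun x => f x + g x) (v + w).
Proof.
  intros [n1 [c1 [A1 [H1 [H2 H3]]]]] [n2 [c2 [A2 [G1 [G2 G3]]]]].
  exists (n1 + n2)%nat, (fun i => if Nat.ltb i n1 then c1 i else c2 (i - n1)%nat),
    (fun i => if Nat.ltb i n1 then A1 i else A2 (i - n1)%nat).
  assert (E : forall (h1 h2 : nat -> R) (F : nat -> R),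
     (forall i, (i < n1)%nat -> F i = h1 i) -> (forall i, (i < n2)%nat -> F (n1 + i)%nat = h2 i) ->
     fsum (n1 + n2) F = fsum n1 h1 + fsum n2 h2).
  { intros h1 h2 F E1 E2. rewrite fsum_app. f_equal; apply fsum_ext; auto. }
  split; [|split].
  - intros i Hi. destruct (Nat.ltb i n1) eqn:E1; [apply H1; apply Nat.ltb_lt; auto|]. apply G1. apply Nat.ltb_ge in E1; lia.
  - intros x Hx. rewrite (E (fun i => c1 i * ind (A1 i) x) (fun i => c2 i * ind (A2 i) x)).
    + specialize (H2 x Hx); specialize (G2 x Hx); lra.
    + intros i Hi. replace (Nat.ltb i n1) with true by (symmetry; apply Nat.ltb_lt; auto). auto.
    + intros i Hi. replace (Nat.ltb (n1 + i) n1) with false by (symmetry; apply Nat.ltb_ge; lia).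
      replace (n1 + i - n1)%nat with i by lia. auto.
  - subst. symmetry. apply E.
    + intros i Hi. replace (Nat.ltb i n1) with true by (symmetry; apply Nat.ltb_lt; auto). auto.
    + intros i Hi. replace (Nat.ltb (n1 + i) n1) with false by (symmetry; apply Nat.ltb_ge; lia).
      replace (n1 + i - n1)%nat with i by lia. auto.
Qed.

Lemma good_add f g B1 B2 : good f B1 -> good g B2 -> good (fun x => f x + g x) (B1 + B2).
Proof. intros H1 H2 x Hx; specialize (H1 x Hx); specialize (H2 x Hx); lra. Qed.

Lemma int_add f g B1 B2 : good f B1 -> good g B2 ->
  integral M f + integral M g <= integral M (fun x => f x + g x).
Proof.
  intros Hf Hg. assert (Hfg := good_add f g B1 B2 Hf Hg).
  assert (K : forall w, simple_below M g w -> integral M f <= integral M (fun x => f x + g x) - w).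
  { intros w Hw. apply (proj2 (int_lub f B1 Hf)). intros v Hv.
    assert (v + w <= integral M (fun x => f x + g x)) by (eapply int_ge; eauto; apply sb_add; auto). lra. }
  assert (integral M g <= integral M (fun x => f x + g x) - integral M f).
  { apply (proj2 (int_lub g B2 Hg)). intros w Hw. specialize (K w Hw). lra. }
  lra.
Qed.

Lemma int_scal c f B : 0 <= c -> good f B -> c * integral M f <= integral M (fun x => c * f x).
Proof.
  intros Hc Hf. assert (Gc : good (fun x => c * f x) (c * B)).
  { intros x Hx; specialize (Hf x Hx); split; nra. }
  destruct (Req_dec c 0) as [E|E].
  - subst c. rewrite Rmult_0_l. eapply int_nonneg; eauto.
  - assert (integral M f <= integral M (fun x => c * f x) / c).
    { apply (proj2 (int_lub f B Hf)). intros v [n [cc [A [H1 [H2 H3]]]]].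
      assert (c * v <= integral M (fun x => c * f x)).
      { eapply int_ge; eauto. exists n, (fun i => c * cc i), A. split; [|split].
        - intros i Hi; split; [apply Rmult_le_pos; auto; apply H1; auto|apply H1; auto].
        - intros x Hx. specialize (H2 x Hx).
          rewrite (fsum_ext n _ (fun i => c * (cc i * ind (A i) x))) by (intros; ring).
          rewrite fsum_scal. apply Rmult_le_compat_l; auto.
        - subst v. rewrite <- fsum_scal. apply fsum_ext; intros; ring. }
      apply (Rmult_le_reg_l c); [lra|]. field_simplify; lra. }
    apply (Rmult_le_reg_l (/ c)); [apply Rinv_0_lt_compat; lra|].
    replace (/ c * (c * integral M f)) with (integral M f) by (field; auto). 
    replace (/ c * integral M (fun x => c * f x)) with (integral M (fun x => c * f x) / c) by (field; auto). auto.
Qed.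

Lemma int_fsum n (f : nat -> R -> R) (Bd : nat -> R) : (forall i, good (f i) (Bd i)) ->
  fsum n (fun i => integral M (f i)) <= integral M (fun x => fsum n (fun i => f i x)).
Proof.
  intros Hg. induction n.
  - simpl. eapply int_nonneg. intros x _; split; [lra|apply Rle_refl].
  - assert (Gn : good (fun x => fsum n (fun i => f i x)) (fsum n Bd)).
    { intros x Hx; split; [apply fsum_nonneg|apply fsum_le]; intros; apply Hg; auto. }
    simpl. eapply Rle_trans; [|apply (int_add _ _ _ _ Gn (Hg n))]. lra.
Qed.
End Int.

Lemma bernoulli d m : 0 <= d <= 1 -> 1 - INR m * d <= (1 - d) ^ m.
Proof. intros Hd. induction m.
 - simpl; lra.
 - rewrite S_INR; simpl. assert (0 <= INR m) by apply pos_INR. nra. Qed.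

Lemma C_nonneg n k : 0 <= C n k.
Proof. unfold C. apply Rmult_le_pos; [apply pos_INR|]. apply Rlt_le, Rinv_0_lt_compat.
  apply Rmult_lt_0_compat; apply lt_0_INR, lt_O_fact. Qed.

Lemma C_n0 n : C n 0 = 1.
Proof. unfold C. simpl. rewrite Nat.sub_0_r. field. apply INR_fact_neq_0. Qed.

Lemma pow_le1 x n : 0 <= x <= 1 -> 0 <= x ^ n <= 1.
Proof. intros H; induction n; simpl; [lra|nra]. Qed.

Lemma binom_split x a : 1 = (1 - x) ^ a + x * fsum a (fun i => C a (S i) * (x ^ i * (1 - x) ^ (a - S i))).
Proof.
  assert (H := binomial x (1 - x) a). replace (x + (1 - x)) with 1 in H by ring. rewrite pow1 in H.
  rewrite <- fsum_sumf, fsum_shift in H. rewrite H at 1. rewrite C_n0, Nat.sub_0_r. rewrite <- fsum_scal.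
  f_equal; [ring|]. apply fsum_ext; intros; simpl; ring.
Qed.

Definition gPhi a := fun x : R => (1 - (1 - x) ^ a) / x.

Lemma good_gPhi a : good (gPhi a) (INR a).
Proof.
  intros x [H0 H1]. unfold gPhi. split.
  - apply Rmult_le_pos; [|apply Rlt_le, Rinv_0_lt_compat; auto].
    assert (H := pow_le1 (1 - x) a ltac:(lra)). lra.
  - assert (H := bernoulli x a ltac:(lra)). apply (Rmult_le_reg_r x); auto.
    unfold Rdiv; rewrite Rmult_assoc, Rinv_l by lra. lra.
Qed.

Lemma good_lam m k : good (fun x => x ^ (k - 1) * (1 - x) ^ (m - k)) 1.
Proof. intros x [H0 H1]. assert (A := pow_le1 x (k - 1) ltac:(lra)). assert (B := pow_le1 (1 - x) (m - k) ltac:(lra)). split; nra. Qed.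

Section S.
Variable M : fmeasure01.

Lemma phi_nonneg m k : 0 <= phi M m k.
Proof. unfold phi, lam. apply Rmult_le_pos; [apply C_nonneg|]. eapply int_nonneg; apply good_lam. Qed.

Lemma Phi_nonneg a : 0 <= PhiN M a.
Proof. unfold PhiN. apply (int_nonneg M _ (INR a)). apply (good_gPhi a). Qed.

Lemma Phi_ge a : (1 <= a)%nat -> mu M in01 <= PhiN M a.
Proof.
  intros Ha. unfold PhiN. apply (int_ge M _ (INR a)); [apply good_gPhi|].
  exists 1%nat, (fun _ => 1), (fun _ => in01). split; [|split].
  - intros; split; [lra|apply msbl01].
  - intros x Hx. simpl. rewrite ind_in by auto. destruct Hx as [H0 H1].
    apply (Rmult_le_reg_r x); auto. unfold Rdiv; rewrite Rmult_assoc, Rinv_l by lra.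
    destruct a; [lia|]. simpl. assert (P := pow_le1 (1 - x) a ltac:(lra)). nra.
  - simpl; ring.
Qed.

Lemma sumA a : fsum a (fun i => phi M a (S i)) <= PhiN M a.
Proof.
  unfold phi, lam, PhiN.
  eapply Rle_trans.
  { apply fsum_le. intros i Hi. apply (int_scal M (C a (S i)) _ 1); [apply C_nonneg|apply good_lam]. }
  eapply Rle_trans.
  { apply (int_fsum M a (fun i x => C a (S i) * (x ^ (S i - 1) * (1 - x) ^ (a - S i))) (fun i => C a (S i) * 1)).
    intros i x Hx. destruct (good_lam a (S i) x Hx). assert (0 <= C a (S i)) by apply C_nonneg. split; nra. }
  apply (int_mono M _ _ (INR a) (good_gPhi a)).
  intros x Hx. assert (E : fsum a (fun i => C a (S i) * (x ^ (S i - 1) * (1 - x) ^ (a - S i))) = gPhi a x).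
  { destruct Hx as [H0 H1]. unfold gPhi. assert (Hb := binom_split x a).
    rewrite (fsum_ext a _ (fun i => C a (S i) * (x ^ i * (1 - x) ^ (a - S i)))).
    2:{ intros i _; simpl; rewrite Nat.sub_0_r; auto. }
    replace (1 - (1 - x) ^ a) with (x * fsum a (fun i => C a (S i) * (x ^ i * (1 - x) ^ (a - S i)))) by lra.
    field; lra. }
  rewrite E. split; [apply (good_gPhi a x Hx)|lra].
Qed.
End S.

Lemma C_shift m i : (i <= m)%nat -> INR (S i) * C (S m) (S i) = INR (S m) * C m i.
Proof.
  intros H. unfold C. replace (S m - S i)%nat with (m - i)%nat by lia.
  change (fact (S m)) with (S m * fact m)%nat. change (fact (S i)) with (S i * fact i)%nat.
  rewrite !mult_INR. field. repeat split; try apply INR_fact_neq_0. apply not_0_INR; lia.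
Qed.

Lemma ind_nonneg (A : R -> Prop) x : 0 <= ind A x.
Proof. unfold ind; destruct (excluded_middle_informative (A x)); lra. Qed.

Lemma disjoint_sum n (c : nat -> R) (I : nat -> R -> Prop) x F :
  (forall j k, (j < n)%nat -> (k < n)%nat -> I j x -> I k x -> j = k) ->
  (forall j, (j < n)%nat -> I j x -> c j <= F) -> 0 <= F ->
  fsum n (fun j => c j * ind (I j) x) <= F.
Proof.
  induction n; intros Hd Hc HF; simpl; [lra|].
  destruct (classic (I n x)) as [Hn|Hn].
  - rewrite ind_in by auto. rewrite fsum_zero.
    + specialize (Hc n ltac:(lia) Hn). lra.
    + intros j Hj. rewrite ind_out; [ring|]. intros Hjx. specialize (Hd j n ltac:(lia) ltac:(lia) Hjx Hn). lia.
  - rewrite ind_out by auto. rewrite Rmult_0_r, Rplus_0_r. apply IHn; [intros; apply Hd; auto; lia | intros; apply Hc; auto; lia | auto].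
Qed.

Lemma divle1 a b : 0 < b -> a <= b -> a / b <= 1.
Proof. intros Hb Hab. replace 1 with (b / b) by (field; lra). unfold Rdiv. apply Rmult_le_compat_r; auto. apply Rlt_le, Rinv_0_lt_compat; auto. Qed.

Section S.
Variable M : fmeasure01.

Lemma msbl_gt c : msbl M (fun x => c < x).
Proof.
  apply (msbl_ext M (fun x => exists m : nat, c < x < c + INR m)).
  - intros x; split; [intros [m Hm]; lra|]. intros Hx. destruct (INR_unbounded (x - c)) as [m Hm]. exists m; lra.
  - apply msbl_union. intros; apply msbl_interval.
Qed.

Lemma sumB a : (1 <= a)%nat -> (mu M in01 / 2) * INR a <= fsum a (fun i => phi M a (S i) * INR (S i)).
Proof.
  intros Ha. destruct a as [|m]; [lia|]. clear Ha.
  set (N := (2 * S m)%nat). set (Nr := INR N).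
  assert (HNr : 0 < Nr) by (apply lt_0_INR; unfold N; lia).
  set (I := fun j : nat => fun x => INR j / Nr < x /\ ~ (INR (S j) / Nr < x)).
  set (al := fun j : nat => INR j / Nr). set (be := fun j : nat => 1 - INR (S j) / Nr).
  set (cst := fun i j : nat => al j ^ i * be j ^ (m - i)).
  assert (HI : forall j, msbl M (I j)).
  { intros j. apply msbl_inter; [apply msbl_gt|apply msbl_compl, msbl_gt]. }
  assert (Hmu : forall j, 0 <= mu M (I j)) by (intros; apply mu_nonneg; auto).
  assert (Hal : forall j, 0 <= al j) by (intros; unfold al; apply Rmult_le_pos; [apply pos_INR|apply Rlt_le, Rinv_0_lt_compat; auto]).
  assert (Hbe : forall j, (j < N)%nat -> 0 <= be j).
  { intros j Hj. unfold be. assert (INR (S j) <= Nr) by (apply le_INR; lia).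
    assert (INR (S j) / Nr <= 1); [|lra]. apply divle1; auto. }
  assert (Hdisj : forall x j k, I j x -> I k x -> j = k).
  { intros x j k [Hj1 Hj2] [Hk1 Hk2].
    destruct (Nat.lt_trichotomy j k) as [L|[L|L]]; auto; exfalso.
    - assert (INR (S j) <= INR k) by (apply le_INR; lia).
      apply Hj2. eapply Rle_lt_trans; [|apply Hk1]. unfold Rdiv; apply Rmult_le_compat_r; auto. apply Rlt_le, Rinv_0_lt_compat; auto.
    - assert (INR (S k) <= INR j) by (apply le_INR; lia).
      apply Hk2. eapply Rle_lt_trans; [|apply Hj1]. unfold Rdiv; apply Rmult_le_compat_r; auto. apply Rlt_le, Rinv_0_lt_compat; auto. }
  assert (St1 : forall i, (i < S m)%nat -> fsum N (fun j => cst i j * mu M (I j)) <= lam M (S m) (S i)).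
  { intros i Hi. unfold lam. apply (int_ge M _ 1); [apply good_lam|].
    exists N, (cst i), I. split; [|split]; auto.
    - intros j Hj. split; auto. unfold cst. apply Rmult_le_pos; apply pow_le; auto.
    - intros x Hx. apply disjoint_sum.
      + intros; eapply Hdisj; eauto.
      + intros j Hj [Hj1 Hj2]. unfold cst. replace (S i - 1)%nat with i by lia. replace (S m - S i)%nat with (m - i)%nat by lia.
        apply Rmult_le_compat; try apply pow_le; auto.
        * apply pow_incr. split; auto. unfold al; lra.
        * apply pow_incr. split; auto. unfold be. lra.
      + apply (good_lam (S m) (S i) x Hx). }
  assert (St3 : mu M in01 <= fsum N (fun j => mu M (I j))).
  { assert (L := sb_lower M N (fun _ => 1) I 1 in01 (msbl01 M) ltac:(intros; auto)).
    rewrite (fsum_ext N (fun j => mu M (I j)) (fun j => 1 * mu M (fun x => I j x /\ in01 x))).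
    - rewrite <- (Rmult_1_l (mu M in01)). apply L.
      intros x [Hx0 Hx1].
      assert (Cov : forall k, (k <= N)%nat -> x <= INR k / Nr -> exists j, (j < k)%nat /\ I j x).
      { induction k; intros Hk Hxk.
        - simpl in Hxk. unfold Rdiv in Hxk; rewrite Rmult_0_l in Hxk. lra.
        - destruct (Rle_lt_dec x (INR k / Nr)) as [L1|L1].
          + destruct (IHk ltac:(lia) L1) as [j [Hj1 Hj2]]. exists j; split; auto.
          + exists k; split; auto. split; auto. lra. }
      destruct (Cov N (le_n _)) as [j [Hj1 Hj2]].
      { unfold Rdiv. fold Nr. rewrite Rinv_r by lra. lra. }
      apply (Rle_trans _ (1 * ind (I j) x)); [rewrite ind_in by auto; lra|].
      apply (fsum_ge_term N (fun j => 1 * ind (I j) x)); auto.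
      intros; rewrite Rmult_1_l; apply ind_nonneg.
    - intros j Hj. rewrite Rmult_1_l. apply mu_support; auto. }
  set (rho := (1 - 1 / Nr) ^ m).
  assert (Hrho : 1 / 2 <= rho).
  { unfold rho. assert (B := bernoulli (1 / Nr) m).
    assert (INR m < Nr / 2) by (unfold Nr, N; rewrite mult_INR, (S_INR m); replace (INR 2) with 2 by (simpl; ring); assert (0 <= INR m) by apply pos_INR; lra).
    assert (2 <= Nr) by (unfold Nr, N; rewrite mult_INR, (S_INR m); replace (INR 2) with 2 by (simpl; ring); assert (0 <= INR m) by apply pos_INR; lra).
    assert (0 <= 1 / Nr <= 1).
    { split; [unfold Rdiv; rewrite Rmult_1_l; apply Rlt_le, Rinv_0_lt_compat; auto|].
      apply divle1; lra. }
    specialize (B H1). assert (INR m * (1 / Nr) <= 1/2).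
    { apply (Rmult_le_reg_r Nr); auto. unfold Rdiv. rewrite Rmult_assoc, Rmult_assoc, Rinv_l by lra. lra. }
    lra. }
  assert (Inner : forall j, fsum (S m) (fun i => C (S m) (S i) * INR (S i) * cst i j) = INR (S m) * rho).
  { intros j. rewrite (fsum_ext _ _ (fun i => INR (S m) * (C m i * al j ^ i * be j ^ (m - i)))).
    - rewrite fsum_scal, fsum_sumf, <- binomial. f_equal. unfold rho, al, be. f_equal. rewrite S_INR. field. lra.
    - intros i Hi. rewrite (Rmult_comm (C (S m) (S i)) (INR (S i))), C_shift by lia. unfold cst. ring. }
  apply (Rle_trans _ (fsum (S m) (fun i => (C (S m) (S i) * INR (S i)) * fsum N (fun j => cst i j * mu M (I j))))).
  2:{ apply fsum_le. intros i Hi. unfold phi.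
      replace (C (S m) (S i) * lam M (S m) (S i) * INR (S i)) with ((C (S m) (S i) * INR (S i)) * lam M (S m) (S i)) by ring.
      apply Rmult_le_compat_l. { apply Rmult_le_pos; [apply C_nonneg|apply pos_INR]. }
      apply (St1 i Hi). }
  rewrite (fsum_ext _ _ (fun i => fsum N (fun j => mu M (I j) * (C (S m) (S i) * INR (S i) * cst i j)))).
  2:{ intros i Hi. rewrite <- fsum_scal. apply fsum_ext; intros; ring. }
  rewrite fsum_swap.
  rewrite (fsum_ext _ _ (fun j => (INR (S m) * rho) * mu M (I j))).
  2:{ intros j Hj. rewrite fsum_scal, Inner. ring. }
  rewrite fsum_scal.
  assert (0 <= INR (S m)) by apply pos_INR.
  assert (0 <= mu M in01) by (apply mu_nonneg, msbl01).
  apply (Rle_trans _ (INR (S m) * rho * mu M in01)); [assert (0 <= (rho - 1/2) * (INR (S m) * mu M in01)) by (apply Rmult_le_pos; [lra|apply Rmult_le_pos; auto]); lra|]. 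
  apply Rmult_le_compat_l; [nra|auto].
Qed.
End S.

Section Ch.
Variable M : fmeasure01.
Hypothesis Hmu : 0 < mu M in01.
Variable r : nat -> R.
Hypothesis Hr : forall k, 0 <= r k.
Hypothesis Hmono : forall k : nat, (1 <= k)%nat ->
     PhiN M (S k) * r (S k) / INR (S k) <= PhiN M k * r k / INR k.

Lemma Phi_pos a : (1 <= a)%nat -> 0 < PhiN M a.
Proof. intros Ha. assert (H := Phi_ge M a Ha). lra. Qed.

Lemma Pjump_nonneg a c : (1 <= a)%nat -> 0 <= Pjump M a c.
Proof. intros Ha. unfold Pjump, Rdiv. apply Rmult_le_pos; [apply phi_nonneg|].
  apply Rlt_le, Rinv_0_lt_compat, Phi_pos; auto. Qed.

Lemma jpow_nonneg t : forall a b, 0 <= jpow M t a b.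
Proof. induction t; intros a b; simpl.
  - destruct (Nat.eqb a b); lra.
  - apply fsum_nonneg. intros c Hc. apply Rmult_le_pos; [apply Pjump_nonneg; lia|auto]. Qed.

Definition w k := PhiN M k * r k / INR k.

Lemma w_nonneg k : 0 <= w k.
Proof. unfold w. destruct k. - simpl. unfold Rdiv; rewrite Rinv_0; lra.
  - unfold Rdiv. apply Rmult_le_pos; [apply Rmult_le_pos; [apply Phi_nonneg|auto]|].
    apply Rlt_le, Rinv_0_lt_compat, lt_0_INR; lia. Qed.

Lemma b_succ n : b_seq M r (S n) = b_seq M r n + w (S n).
Proof. unfold b_seq, w. rewrite fsumS. unfold Rdiv; ring. Qed.

Lemma b_nonneg n : 0 <= b_seq M r n.
Proof. induction n; [unfold b_seq; simpl; lra|]. rewrite b_succ. assert (H := w_nonneg (S n)). lra. Qed.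

Lemma b_diff c d : INR d * w (c + d) <= b_seq M r (c + d) - b_seq M r c.
Proof.
  induction d.
  - rewrite Nat.add_0_r. simpl. lra.
  - rewrite Nat.add_succ_r, b_succ, S_INR.
    assert (INR d * w (S (c + d)) <= INR d * w (c + d)).
    { destruct d. - simpl; lra. - apply Rmult_le_compat_l; [apply pos_INR|]. apply Hmono. lia. }
    lra.
Qed.

Definition kap := mu M in01 / 2.
Definition V a := b_seq M r a / kap.

Lemma key a : (1 <= a)%nat -> r a + fsum a (fun c => Pjump M a c * V c) <= V a.
Proof.
  intros Ha. assert (HP := Phi_pos a Ha). set (P := PhiN M a) in *.
  assert (Hk : 0 < kap) by (unfold kap; lra).
  set (SP := fsum a (fun c => Pjump M a c)).
  set (SD := fsum a (fun c => Pjump M a c * INR (a - c))).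
  assert (E1 : fsum a (fun c => Pjump M a c * V c) <= (/ kap * b_seq M r a) * SP + (- (/ kap * w a)) * SD).
  { unfold SP, SD. rewrite <- !fsum_scal, <- fsum_plus. apply fsum_le. intros c Hc.
    assert (B := b_diff c (a - c)). replace (c + (a - c))%nat with a in B by lia.
    assert (0 <= Pjump M a c) by (apply Pjump_nonneg; auto).
    unfold V. replace (b_seq M r c / kap) with (/ kap * b_seq M r c) by (unfold Rdiv; ring).
    assert (0 <= / kap) by (apply Rlt_le, Rinv_0_lt_compat; auto).
    assert (b_seq M r c <= b_seq M r a - INR (a - c) * w a) by lra.
    assert (0 <= Pjump M a c * / kap) by (apply Rmult_le_pos; auto).
    assert (HL : Pjump M a c * / kap * b_seq M r c <= Pjump M a c * / kap * (b_seq M r a - INR (a - c) * w a)) by (apply Rmult_le_compat_l; auto).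
    eapply Rle_trans; [|eapply Rle_trans; [apply HL|right; ring]]. right; ring. }
  assert (ESP : SP = / P * fsum a (fun i => phi M a (S i))).
  { unfold SP. rewrite <- (fsum_refl a (fun k => phi M a k)), <- fsum_scal. apply fsum_ext; intros. unfold Pjump, Rdiv. fold P. ring. }
  assert (ESD : SD = / P * fsum a (fun i => phi M a (S i) * INR (S i))).
  { unfold SD. rewrite <- (fsum_refl a (fun k => phi M a k * INR k)), <- fsum_scal. apply fsum_ext; intros. unfold Pjump, Rdiv. fold P. ring. }
  assert (SPle : SP <= 1).
  { rewrite ESP. assert (A := sumA M a). fold P in A. apply (Rmult_le_reg_l P); auto.
    rewrite <- Rmult_assoc, Rinv_r by lra. lra. }
  assert (SDge : kap * INR a / P <= SD).
  { rewrite ESD. assert (B := sumB M a Ha). unfold Rdiv. rewrite (Rmult_comm _ (/ P)). apply Rmult_le_compat_l.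
    - apply Rlt_le, Rinv_0_lt_compat; auto.
    - unfold kap. lra. }
  assert (Ew : r a = w a * INR a / P).
  { unfold w. fold P. assert (INR a <> 0) by (apply not_0_INR; lia). field. split; lra. }
  assert (Hb := b_nonneg a). assert (Hw := w_nonneg a).
  assert (0 <= SP) by (unfold SP; apply fsum_nonneg; intros; apply Pjump_nonneg; auto).
  assert (T1 : (/ kap * b_seq M r a) * SP <= / kap * b_seq M r a).
  { assert (0 <= / kap * b_seq M r a) by (apply Rmult_le_pos; auto; apply Rlt_le, Rinv_0_lt_compat; auto). nra. }
  assert (T2 : r a <= (/ kap * w a) * SD).
  { rewrite Ew. apply (Rle_trans _ ((/ kap * w a) * (kap * INR a / P))).
    - right. field. split; lra.
    - apply Rmult_le_compat_l; auto. apply Rmult_le_pos; auto. apply Rlt_le, Rinv_0_lt_compat; auto. }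
  replace (V a) with (/ kap * b_seq M r a) by (unfold V, Rdiv; ring). lra.
Qed.

Definition Q s a L := fsum L (fun i => jpow M s a (S i) * r (S i)).

Lemma Q0_zero a L : (L < a)%nat -> Q 0 a L = 0.
Proof. intros H. unfold Q. apply fsum_zero. intros i Hi. simpl.
  replace (Nat.eqb a (S i)) with false by (symmetry; apply Nat.eqb_neq; lia). ring. Qed.

Lemma Q0_bound a L : (1 <= a)%nat -> Q 0 a L <= r a.
Proof. intros Ha. induction L.
  - unfold Q; simpl; auto.
  - unfold Q in *. rewrite fsumS. simpl jpow at 2.
    destruct (Nat.eqb a (S L)) eqn:E.
    + apply Nat.eqb_eq in E. subst a. fold (Q 0 (S L) L). rewrite Q0_zero by lia. lra.
    + lra.
Qed.

Lemma main t : forall a L, fsum t (fun s => Q s a L) <= V a.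
Proof.
  assert (Hk : 0 < kap) by (unfold kap; lra).
  induction t; intros a L.
  - simpl. unfold V, Rdiv. apply Rmult_le_pos; [apply b_nonneg|apply Rlt_le, Rinv_0_lt_compat; auto].
  - rewrite fsum_shift.
    rewrite (fsum_ext t (fun s => Q (S s) a L) (fun s => fsum a (fun c => Pjump M a c * Q s c L))).
    2:{ intros s _. unfold Q. simpl jpow.
        rewrite (fsum_ext L _ (fun i => fsum a (fun c => Pjump M a c * (jpow M s c (S i) * r (S i))))).
        - rewrite fsum_swap. apply fsum_ext. intros. rewrite fsum_scal; auto.
        - intros. rewrite Rmult_comm, <- fsum_scal. apply fsum_ext; intros; ring. }
    rewrite <- fsum_swap.
    rewrite (fsum_ext a _ (fun c => Pjump M a c * fsum t (fun s => Q s c L))) by (intros; apply fsum_scal).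
    destruct a.
    + simpl. unfold Q; simpl. unfold V, b_seq; simpl. unfold Rdiv. rewrite (fsum_zero L); [lra|].
      intros; simpl; ring.
    + eapply Rle_trans; [|apply key; lia].
      apply Rplus_le_compat; [apply Q0_bound; lia|].
      apply fsum_le. intros c Hc. apply Rmult_le_compat_l; [apply Pjump_nonneg; lia|auto].
Qed.

Lemma a_eq n : a_seq M r n = fsum (S n) (fun s => Q s n n).
Proof. unfold a_seq, g, Q. rewrite <- fsum_swap. apply fsum_ext. intros i _.
  rewrite Rmult_comm, <- fsum_scal. apply fsum_ext; intros; ring. Qed.

Lemma a_nonneg n : 0 <= a_seq M r n.
Proof. unfold a_seq. apply fsum_nonneg. intros i _. apply Rmult_le_pos; auto.
  unfold g. apply fsum_nonneg; intros; apply jpow_nonneg. Qed.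
End Ch.

Theorem lemma2 (M : fmeasure01)
  (Hnonzero : mu M in01 <> 0)
  (r : nat -> R)
  (Hr : forall k, 0 <= r k)
  (Hmono : forall k : nat, (1 <= k)%nat ->
     PhiN M (S k) * r (S k) / INR (S k) <= PhiN M k * r k / INR k) :
  exists (K : R) (N : nat), forall n : nat, (N <= n)%nat ->
    Rabs (a_seq M r n) <= K * Rabs (b_seq M r n).
Proof.
  assert (Hmu : 0 < mu M in01).
  { assert (H := mu_nonneg M in01 (msbl01 M)). destruct H; auto. exfalso; auto. }
  exists (/ kap M), 0%nat. intros n _.
  rewrite (Rabs_right (a_seq M r n)) by (apply Rle_ge, a_nonneg; auto).
  rewrite (Rabs_right (b_seq M r n)) by (apply Rle_ge, b_nonneg; auto).
  rewrite a_eq. eapply Rle_trans; [apply main; auto|]. unfold V, Rdiv. right; ring.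
Qed.
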